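(* Let $(A,+,\circ)$ be a finite skew brace and let $(A,r_A)$ be its associated sb-solution. If $A$ is supersoluble, then the solution $(A,r_A)$ is supersoluble at $0$ (i.e. $(A,r_A)$ is a supersoluble sb-solution).
   Context: A skew brace is a set $A$ with two group structures $(A,+)$ and $(A,\circ)$ such that $a\circ(b+c)=a\circ b-a+a\circ c$ for all $a,b,c\in A$; the identities of both groups coincide and are denoted $0$. For $a\in A$ put $\lambda_a(b)=-a+a\circ b$; then $\lambda_a\in\mathrm{Aut}(A,+)$ and $a\mapsto\lambda_a$ is a homomorphism from $(A,\circ)$. An ideal of $A$ is a subgroup $I$ of $(A,+)$ with $\lambda_a(I)=I$ for all $a$, normal in both $(A,+)$ and $(A,\circ)$. A finite skew brace is supersoluble if there is a chain of ideals $\{0\}=I_0\subseteq I_1\subseteq\dots\subseteq I_m=A$ with $|I_{i+1}/I_i|$ prime for all $i$. A solution of the Yang--Baxter equation is a pair $(X,r)$ with $r(x,y)=(\lambda_x(y),\rho_y(x))$ a bijection of $X\times X$ satisfying $r_{12}r_{23}r_{12}=r_{23}r_{12}r_{23}$ (where $r_{12}=r\times\mathrm{id}_X$, $r_{23}=\mathrm{id}_X\times r$), with all $\lambda_x,\rho_x$ bijective. The sb-solution associated with $A$ is $(A,r_A)$ with $r_A(a,b)=(\lambda_a(b),\lambda_a(b)^{-1}\circ a\circ b)$, where $^{-1}$ is the inverse in $(A,\circ)$. A solution $(X,r)$ is trivial if $|X|\ge 2$ and $r(x,y)=(y,x)$. A morphism $f:(X,r)\to(Y,s)$ of solutions is a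 map $f:X\to Y$ with $(f\times f)\circ r=s\circ(f\times f)$; write $x\sim_f y$ iff $f(x)=f(y)$. If $Z\subseteq X$ satisfies $\lambda_x(Z)=Z=\rho_x(Z)$ for all $x\in X$, then $s$ restricts to a solution on $f(Z)$. A finite solution $(X,r)$ is supersoluble at $x_0\in X$ if there is a chain of subsets $\{x_0\}=X_0\subseteq X_1\subseteq\dots\subseteq X_m=X$ and, for each $i=0,\dots,m-1$, a solution $(Y_i,s_i)$ and a morphism $f_i:(X,r)\to(Y_i,s_i)$ such that: (1) $X_i$ is an equivalence class of $\sim_{f_i}$; (2) all equivalence classes of $\sim_{f_i}$ have size $|X_i|$; (3) $X_{i+1}$ is a union of equivalence classes of $\sim_{f_i}$; (4) $\lambda_x(X_{i+1})=X_{i+1}$ and $\rho_x(X_{i+1})=X_{i+1}$ for all $x\in X$; (5) the restriction of $s_i$ to $f_i(X_{i+1})\times f_i(X_{i+1})$ is a trivial solution on $f_i(X_{i+1})$ of prime cardinality. An sb-solution $(A,r_A)$ is called supersoluble if it is supersoluble at $0$. *)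

(* Defs.v *)
From mathcomp Require Import all_boot.
Set Implicit Arguments. Unset Strict Implicit. Unset Printing Implicit Defensive.

Record skew_brace (T : finType) := SkewBrace {
  sb_add  : T -> T -> T;
  sb_opp  : T -> T;
  sb_zero : T;
  sb_circ : T -> T -> T;
  sb_cinv : T -> T;
  sb_addA : forall a b c, sb_add a (sb_add b c) = sb_add (sb_add a b) c;
  sb_add0l : forall a, sb_add sb_zero a = a;
  sb_add0r : forall a, sb_add a sb_zero = a;
  sb_addNl : forall a, sb_add (sb_opp a) a = sb_zero;
  sb_addNr : forall a, sb_add a (sb_opp a) = sb_zero;
  sb_circA : forall a b c, sb_circ a (sb_circ b c) = sb_circ (sb_circ a b) c;
  sb_circ0l : forall a, sb_circ sb_zero a = a;
  sb_circ0r : forall a, sb_circ a sb_zero = a;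
  sb_circVl : forall a, sb_circ (sb_cinv a) a = sb_zero;
  sb_circVr : forall a, sb_circ a (sb_cinv a) = sb_zero;
  sb_brace : forall a b c,
    sb_circ a (sb_add b c) = sb_add (sb_add (sb_circ a b) (sb_opp a)) (sb_circ a c)
}.

Section SkewBraceDefs.
Variables (T : finType) (B : skew_brace T).

Let add := sb_add B.
Let opp := sb_opp B.
Let circ := sb_circ B.

Definition sb_lambda (a b : T) : T := add (opp a) (circ a b).

Definition is_ideal (I : {set T}) : Prop :=
  [/\
      [/\ sb_zero B \in I,
          (forall x y, x \in I -> y \in I -> add x y \in I) &
          (forall x, x \in I -> opp x \in I)],
      (forall x y, x \in I -> y \in I -> circ x y \in I) /\
      (forall x, x \in I -> sb_cinv B x \in I),
      (forall a, [set sb_lambda a x | x in I] = I),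
      (forall a x, x \in I -> add (add a x) (opp a) \in I) &
      (forall a x, x \in I -> circ (circ a x) (sb_cinv B a) \in I)].

(** Supersoluble skew brace: chain of ideals 0 = I_0 <= ... <= I_m = A
    with |I_{i+1}/I_i| = |I_{i+1}|/|I_i| prime. *)
Definition supersoluble_brace : Prop :=
  exists (m : nat) (I : nat -> {set T}),
    [/\ I 0 = [set sb_zero B],
        I m = [set: T],
        (forall i, i <= m -> is_ideal (I i)) &
        (forall i, i < m -> I i \subset I i.+1 /\ prime (#|I i.+1| %/ #|I i|))].

Definition sb_solution (p : T * T) : T * T :=
  let: (a, b) := p in
  (sb_lambda a b, circ (circ (sb_cinv B (sb_lambda a b)) a) b).

End SkewBraceDefs.

Section Solutions.

Definition sol_lambda (X : Type) (r : X * X -> X * X) (x : X) : X -> X :=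
  fun y => (r (x, y)).1.
Definition sol_rho (X : Type) (r : X * X -> X * X) (y : X) : X -> X :=
  fun x => (r (x, y)).2.

Definition r12 (X : Type) (r : X * X -> X * X) (t : X * X * X) : X * X * X :=
  let: (x, y, z) := t in let: (a, b) := r (x, y) in (a, b, z).
Definition r23 (X : Type) (r : X * X -> X * X) (t : X * X * X) : X * X * X :=
  let: (x, y, z) := t in let: (b, c) := r (y, z) in (x, b, c).

Definition is_solution (X : Type) (r : X * X -> X * X) : Prop :=
  [/\ bijective r,
      (forall x, bijective (sol_lambda r x)),
      (forall x, bijective (sol_rho r x)) &
      (forall t, r12 r (r23 r (r12 r t)) = r23 r (r12 r (r23 r t)))].

Definition is_sol_morphism (X Y : Type) (r : X * X -> X * X)
    (s : Y * Y -> Y * Y) (f : X -> Y) : Prop :=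
  forall p : X * X, (f (r p).1, f (r p).2) = s (f p.1, f p.2).

(** Supersolubility of a finite solution (X, r) at x0.  The image
    f(X_{i+1}) is taken in an eqType Y, its cardinality being the number
    of distinct values of f on X_{i+1}. *)
Definition supersoluble_solution_at (X : finType) (r : X * X -> X * X)
    (x0 : X) : Prop :=
  exists (m : nat) (Xs : nat -> {set X}),
    [/\ Xs 0 = [set x0],
        Xs m = [set: X],
        (forall i, i < m -> Xs i \subset Xs i.+1) &
        (forall i, i < m ->
          exists (Y : eqType) (s : Y * Y -> Y * Y) (f : X -> Y),
            [/\ is_solution s /\ is_sol_morphism r s f,
                (* (1) X_i is an equivalence class of ~_f *)
                (exists x, Xs i = [set y | f y == f x]),
                (forall x, #|[set y | f y == f x]| = #|Xs i|),
                (forall x y, f x = f y -> x \in Xs i.+1 -> y \in Xs i.+1) /\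
                (forall x, [set sol_lambda r x y | y in Xs i.+1] = Xs i.+1 /\
                           [set sol_rho r x y | y in Xs i.+1] = Xs i.+1) &
                (* (5) s restricted to f(X_{i+1}) is trivial of prime size *)
                ((forall y z, y \in Xs i.+1 -> z \in Xs i.+1 ->
                     s (f y, f z) = (f z, f y)) /\
                 prime (size (undup [seq f x | x <- enum (Xs i.+1)])))])].

End Solutions.

(* Main.v *)
Require Import Defs.
From mathcomp Require Import all_boot.
From HB Require Import structures.
From mathcomp Require Import all_boot all_fingroup.
From mathcomp Require Import cyclic.
Set Implicit Arguments. Unset Strict Implicit. Unset Printing Implicit Defensive.

Definition Tc (T : finType) (B : skew_brace T) : Type := T.
HB.instance Definition _ (T : finType) (B : skew_brace T) := Finite.on (Tc B).
HB.instance Definition _ (T : finType) (B : skew_brace T) :=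
  Finite_isGroup.Build (Tc B) (@sb_circA T B) (@sb_circ0l T B) (@sb_circVl T B).

Arguments sb_solution : simpl never.

Section Brace.
Variables (T : finType) (B : skew_brace T).
Local Notation G := (Tc B).
Local Notation add := (sb_add B).
Local Notation opp := (sb_opp B).
Local Notation z0 := (sb_zero B).
Local Open Scope group_scope.

Definition lam (a b : G) : G := sb_lambda B a b.
Definition rho (b a : G) : G := (lam a b)^-1 * a * b.

Lemma z0E : z0 = 1 :> G. Proof. by []. Qed.
Lemma rE (a b : T) : sb_solution B (a, b) = (lam a b, rho b a).
Proof. by []. Qed.

Lemma add0r a : add a z0 = a. Proof. exact: sb_add0r. Qed.
Lemma add0l a : add z0 a = a. Proof. exact: sb_add0l. Qed.
Lemma addNl a : add (opp a) a = z0. Proof. exact: sb_addNl. Qed.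
Lemma addNr a : add a (opp a) = z0. Proof. exact: sb_addNr. Qed.
Lemma addA a b c : add a (add b c) = add (add a b) c. Proof. exact: sb_addA. Qed.
Lemma addKl a b : add (opp a) (add a b) = b.
Proof. by rewrite addA addNl add0l. Qed.
Lemma addNKl a b : add a (add (opp a) b) = b.
Proof. by rewrite addA addNr add0l. Qed.
Lemma oppK a : opp (opp a) = a.
Proof. have h := addKl (opp a) a. by rewrite addNl add0r in h. Qed.
Lemma eq_oppl x y : add x y = z0 -> x = opp y.
Proof. by move=> h; rewrite -[x]add0r -(addNr y) addA h add0l. Qed.
Lemma oppD x y : opp (add x y) = add (opp y) (opp x).
Proof.
apply/esym/eq_oppl; rewrite -addA (addA (opp x)) addNl add0l addNl //.
Qed.
Lemma opp0 : opp z0 = z0.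
Proof. by apply/esym/eq_oppl; rewrite add0l. Qed.

Lemma circ_lam (a b : G) : a * b = add a (lam a b).
Proof. by rewrite /lam /sb_lambda addNKl. Qed.
Lemma lamD (a b c : G) : lam a (add b c) = add (lam a b) (lam a c).
Proof. by rewrite /lam /sb_lambda sb_brace !addA. Qed.
Lemma lam0 (a : G) : lam a 1 = 1.
Proof. by rewrite /lam /sb_lambda sb_circ0r addNl. Qed.
Lemma lamN (a b : G) : lam a (opp b) = opp (lam a b).
Proof. by apply: eq_oppl; rewrite -lamD addNl lam0. Qed.
Lemma lamM (a b c : G) : lam (a * b) c = lam a (lam b c).
Proof.
rewrite [in RHS]/lam [sb_lambda B b c]/sb_lambda.
rewrite -/(lam a _) lamD lamN /lam /sb_lambda oppD oppK.
rewrite -addA addNKl.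
have -> : sb_circ B a (sb_circ B b c) = (a * (b * c) : G) by [].
by rewrite mulgA.
Qed.
Lemma lam1 (c : G) : lam 1 c = c.
Proof. by rewrite /lam /sb_lambda sb_circ0l opp0 add0l. Qed.
Lemma lamK (a c : G) : lam a (lam a^-1 c) = c.
Proof. by rewrite -lamM mulgV lam1. Qed.
Lemma lamKV (a c : G) : lam a^-1 (lam a c) = c.
Proof. by rewrite -lamM mulVg lam1. Qed.

Lemma lam_rho (a b : G) : lam a b * rho b a = a * b.
Proof. by rewrite /rho !mulgA mulgV mul1g. Qed.

Lemma lam_circ_rho (x a b : G) : lam x (a * b) = lam x a * lam (rho a x) b.
Proof.
rewrite [a * b]circ_lam lamD -lamM [RHS]circ_lam -lamM lam_rho //.
Qed.

Lemma rhoM (a b x : G) : rho (a * b) x = rho b (rho a x).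
Proof. by rewrite {1}/rho lam_circ_rho invMg /rho !mulgA. Qed.
Lemma rho1 (x : G) : rho 1 x = x.
Proof. by rewrite /rho lam0 invg1 mul1g mulg1. Qed.
Lemma rhoK (a x : G) : rho a^-1 (rho a x) = x.
Proof. by rewrite -rhoM mulgV rho1. Qed.
Lemma rhoKV (a x : G) : rho a (rho a^-1 x) = x.
Proof. by rewrite -rhoM mulVg rho1. Qed.

Lemma r_surj (u v : G) : exists x y : G, lam x y = u /\ rho y x = v.
Proof.
pose w : G := u * v; pose x : G := add w (opp u).
have hl : lam x (x^-1 * w) = u.
  rewrite /lam /sb_lambda.
  have -> : sb_circ B x (x^-1 * w) = (x * (x^-1 * w) : G) by [].
  by rewrite mulKVg /x oppD oppK -addA addNl add0r.
exists x, (x^-1 * w); split => //.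
by rewrite /rho hl -mulgA mulKVg /w mulKg.
Qed.

Lemma r12E (x y z : T) : r12 (sb_solution B) (x, y, z) = @pair (T * T) T (@pair T T (lam x y) (rho y x)) z.
Proof. by []. Qed.
Lemma r23E (x y z : T) : r23 (sb_solution B) (x, y, z) = @pair (T * T) T (@pair T T x (lam y z)) (rho z y).
Proof. by []. Qed.

Lemma ybe_aux (x y z : G) :
  @pair (T * T) T (@pair T T (lam (lam x y) (lam (rho y x) z)) (rho (lam (rho y x) z) (lam x y))) (rho z (rho y x))
  = @pair (T * T) T (@pair T T (lam x (lam y z)) (lam (rho (lam y z) x) (rho z y))) (rho (rho z y) (rho (lam y z) x)).
Proof.
have e1 : lam (lam x y) (lam (rho y x) z) = lam x (lam y z).
  by rewrite -lamM lam_rho lamM.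
have e3 : rho z (rho y x) = rho (rho z y) (rho (lam y z) x).
  by rewrite -!rhoM lam_rho.
have h : lam (lam x y) (lam (rho y x) z) * rho (lam (rho y x) z) (lam x y)
           * rho z (rho y x) = x * y * z.
  by rewrite lam_rho -mulgA lam_rho mulgA lam_rho.
have h' : lam x (lam y z) * lam (rho (lam y z) x) (rho z y)
           * rho (rho z y) (rho (lam y z) x) = x * y * z.
  by rewrite -mulgA lam_rho mulgA lam_rho -mulgA lam_rho mulgA.
rewrite e1 e3 -h' in h *.
congr (_, _, _).
by apply: (mulgI (lam x (lam y z))); apply: (mulIg (rho (rho z y) (rho (lam y z) x))).
Qed.

Lemma ybeT (t : T * T * T) :
  r12 (sb_solution B) (r23 (sb_solution B) (r12 (sb_solution B) t)) =
  r23 (sb_solution B) (r12 (sb_solution B) (r23 (sb_solution B) t)).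
Proof. by case: t => [[x y] z]; exact: ybe_aux. Qed.

End Brace.
Section Ideal.
Variables (T : finType) (B : skew_brace T).
Local Notation G := (Tc B).
Local Notation add := (sb_add B).
Local Notation opp := (sb_opp B).
Local Notation z0 := (sb_zero B).
Local Open Scope group_scope.

Definition toG (I : {set T}) : {set G} := [set x : G | (x : T) \in I].
Lemma memG (I : {set T}) (x : G) : (x \in toG I) = (x \in I).
Proof. by rewrite inE. Qed.
Lemma cardG (P : pred T) : #|[set x : G | P x]| = #|[set x : T | P x]|.
Proof. by rewrite !cardsE !cardE /enum_mem !unlock. Qed.

Lemma ideal_gs (I : {set T}) : is_ideal B I -> group_set (toG I).
Proof.
case=> [[h0 _ _] [hc _] _ _ _]; apply/group_setP; split; first by rewrite memG.
by move=> x y; rewrite !memG; exact: hc.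
Qed.

Variables (I : {set T}) (hN : is_ideal B I).
Definition NI : {group G} := Group (ideal_gs hN).
Local Notation N := NI.
Lemma memN (x : G) : (x \in N) = (x \in I).
Proof. exact: memG. Qed.

Lemma normN (a : G) : a \in 'N(N).
Proof.
case: hN => _ _ _ _ hc.
rewrite inE; apply/subsetP => y; rewrite mem_conjg memN => hy.
rewrite -(conjgKV a y) conjgE memN.
have h := hc a^-1 _ hy.
have e : sb_circ B (sb_circ B a^-1 (y ^ a^-1)) (sb_cinv B a^-1) = a^-1 * (y ^ a^-1) * a^-1^-1 by [].
by rewrite e invgK -mulgA in h.
Qed.

Lemma lamI (a n : G) : n \in N -> lam a n \in N.
Proof.
rewrite !memN => hn; case: hN => _ _ hl _ _.
by rewrite -(hl a); apply: imset_f.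
Qed.

Local Notation f := (coset N).

Lemma fM (a b : G) : f (a * b) = f a * f b.
Proof. by rewrite morphM ?normN. Qed.
Lemma fV (a : G) : f a^-1 = (f a)^-1.
Proof. by rewrite morphV ?normN. Qed.
Lemma f1 (n : G) : n \in N -> f n = 1.
Proof. exact: coset_id. Qed.

Lemma fE (a b : G) : (f a == f b) = (a \in N :* b).
Proof. by apply/eqP/idP => /rcoset_kercosetP; apply; apply: normN. Qed.

Lemma fA (w n : G) : n \in N -> f (add w n) = f w.
Proof.
move=> hn.
have -> : add w n = w * lam w^-1 n.
  by rewrite circ_lam -lamM mulgV lam1.
by rewrite fM (f1 (lamI _ hn)) mulg1.
Qed.

Lemma fB (w n : G) : n \in N -> f (add n w) = f w.
Proof.
move=> hn.
have -> : add n w = add w (add (add (opp w) n) (opp (opp w))).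
  by rewrite oppK addA addNKl.
apply: fA; rewrite memN.
by case: hN => _ _ _ ha _; by apply: ha; rewrite -memN.
Qed.

Lemma fD (n w : G) : n \in N -> f (lam n w) = f w.
Proof.
move=> hn; rewrite /lam /sb_lambda fB.
  by have -> : sb_circ B n w = n * w by []; rewrite fM f1 ?mul1g.
rewrite memN; case: hN => [[_ _ ho] _ _ _ _]; by apply: ho; rewrite -memN.
Qed.

Lemma fC (x a b : G) : f a = f b -> f (lam x a) = f (lam x b).
Proof.
move/eqP; rewrite fE mem_rcoset => hab.
have -> : a = (a * b^-1) * b by rewrite mulgKV.
move: hab; set n := a * b^-1 => hn.
rewrite [n * b]circ_lam lamD fB ?lamI //.
rewrite -lamM.
have -> : x * n = (x * n * x^-1) * x by rewrite mulgKV.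
rewrite lamM fD //.
rewrite memN; case: hN => _ _ _ _ hc; by apply: hc; rewrite -memN.
Qed.

Lemma fWD (x x' y y' : G) : f x = f x' -> f y = f y' -> f (lam x y) = f (lam x' y').
Proof.
move=> hx hy; rewrite (fC x hy).
move/eqP: hx; rewrite eq_sym fE mem_rcoset => hx.
have -> : x' = (x' * x^-1) * x by rewrite mulgKV.
by rewrite lamM (fD _ hx).
Qed.

Lemma fWDr (x x' y y' : G) : f x = f x' -> f y = f y' -> f (rho y x) = f (rho y' x').
Proof.
move=> hx hy; rewrite /rho !fM !fV hx hy (fWD hx hy) //.
Qed.

End Ideal.

Lemma surj_bij (X : finType) (g : X -> X) : (forall y, exists x, g x = y) -> bijective g.
Proof.
move=> h.
have h' : forall y, exists x, g x == y by move=> y; have [x <-] := h y; exists x.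
pose hh y := xchoose (h' y).
have c : cancel hh g by move=> y; apply/eqP; exact: (xchooseP (h' y)).
exact: (bij_can_bij (injF_bij (can_inj c)) c).
Qed.

Section Step.
Variables (T : finType) (B : skew_brace T).
Local Notation G := (Tc B).
Local Open Scope group_scope.

Lemma cardNI (I : {set T}) (h : is_ideal B I) : #|NI h| = #|I|.
Proof. by rewrite /= /toG cardG; apply: eq_card => x; rewrite inE. Qed.

Variables (I0 I1 : {set T}) (h0 : is_ideal B I0) (h1 : is_ideal B I1).
Hypotheses (sub01 : I0 \subset I1) (hp : prime (#|I1| %/ #|I0|)).

Local Notation N := (NI h0).
Local Notation S := (NI h1).
Local Notation f := (coset N).
Local Notation p := (#|I1| %/ #|I0|)%N.

Lemma NS : N \subset S.
Proof. by apply/subsetP => x; rewrite !memN; apply: (subsetP sub01). Qed.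

Lemma cardQ : #|S / N| = p.
Proof.
rewrite card_quotient; last by apply/subsetP => x _; apply: normN.
by rewrite -divgS ?NS // !cardNI.
Qed.

Lemma expp (y : G) : y \in S -> y ^+ p \in N.
Proof.
move=> yS; apply: coset_idr; first exact: normN.
rewrite morphX ?normN // -cardQ expg_cardG // mem_quotient //.
Qed.

Lemma iter_lam k (y w : G) : iter k (lam y) w = lam (y ^+ k) w.
Proof.
elim: k w => [|k IH] w /=; first by rewrite lam1.
by rewrite IH expgS lamM.
Qed.

Lemma lam_triv (y z : G) : y \in S -> z \in S -> f (lam y z) = f z.
Proof.
move=> yS zS.
have fCk : forall k a b, f a = f b -> f (iter k (lam y) a) = f (iter k (lam y) b).
  by elim=> [|k IH] a b //= /IH; apply: fC.
have finj : forall k a b, f (iter k (lam y) a) = f (iter k (lam y) b) -> f a = f b.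
  elim=> [|k IH] a b //= h; apply: IH.
  rewrite -[iter k (lam y) a](lamKV y) -[iter k (lam y) b](lamKV y).
  exact: fC h.
have fp : forall w, f (iter p (lam y) w) = f w.
  by move=> w; rewrite iter_lam fD // expp.
have fpu : forall u w, f (iter (p * u) (lam y) w) = f w.
  elim=> [|u IH] w; first by rewrite muln0.
  by rewrite mulnS iterD fp IH.
have fdu : forall d u, f (iter d (lam y) z) = f z -> f (iter (d * u) (lam y) z) = f z.
  move=> d u hd; elim: u => [|u IH]; first by rewrite muln0.
  by rewrite mulnS iterD (fCk d _ _ IH) hd.
have key : forall d, (0 < d < p)%N -> f (iter d (lam y) z) = f z -> f (lam y z) = f z.
  move=> d /andP [d0 dp] hd.
  have [a _ ha] := Bezoutl p d0.
  have cop : gcdn d p = 1%N.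
    apply/eqP; rewrite -/(coprime d p) coprime_sym prime_coprime //.
    by rewrite gtnNdvd.
  rewrite cop in ha.
  have eu : (d * ((1 + a * p) %/ d) = 1 + a * p)%N by rewrite mulnC divnK.
  have := fdu d ((1 + a * p) %/ d)%N hd.
  rewrite eu iterD /= => h; rewrite -h; apply: fC.
  by rewrite mulnC fpu.
apply/eqP/negPn/negP => hne.
pose h (k : 'I_p) := f (iter k (lam y) z).
have hinj : injective h.
  move=> i j; rewrite /h => hij; apply/val_inj => /=.
  wlog le : i j hij / (i <= j)%N.
    move=> W; case/orP: (leq_total i j) => ?; first exact: W.
    by apply/esym; apply: W.
  move: le; rewrite leq_eqVlt => /orP [/eqP // | lt].
  have e : nat_of_ord j = (i + (j - i))%N by rewrite subnKC // ltnW.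
  rewrite e iterD in hij.
  have := finj _ _ _ hij => hz.
  have : f (lam y z) = f z.
    apply: (key (j - i)%N); last by rewrite hz.
    by rewrite subn_gt0 lt /= (leq_ltn_trans (leq_subr i j) (ltn_ord j)).
  by move/eqP; rewrite (negbTE hne).
have iter1 : forall k, iter k (lam y) 1 = 1 by elim=> //= k ->; exact: lam0.
have hne1 : forall k, h k != 1.
  move=> k; apply/eqP => hk.
  have : f (iter k (lam y) z) = f (iter k (lam y) 1) by rewrite iter1 morph1; exact: hk.
  move/finj => hz.
  move: hne; rewrite (@fC _ _ _ h0 y _ _ hz) lam0 hz eqxx //.
have iterS : forall k, iter k (lam y) z \in S.
  elim=> //= k IH; exact: lamI.
have hsub : [set h k | k : 'I_p] \subset (S / N) :\ 1.
  apply/subsetP => _ /imsetP [k _ ->].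
  by rewrite in_setD1 hne1 /=; exact: (@mem_quotient _ N _ S (iterS k)).
have := subset_leq_card hsub.
rewrite card_imset // card_ord.
have c := cardsD1 1 (S / N).
rewrite group1 cardQ in c.
rewrite [in X in (X <= _)%N]c.
by rewrite /= ltnn.
Qed.

Lemma rho_triv (y z : G) : y \in S -> z \in S -> f (rho z y) = f y.
Proof.
move=> yS zS.
rewrite /rho !fM fV (lam_triv yS zS).
have ab : abelian (S / N).
  apply: cyclic_abelian; apply: (@prime_cyclic _ (S / N)%G).
  by rewrite cardQ.
have c : commute (f y) (f z).
  by apply: (centsP ab); apply: mem_quotient.
by rewrite -mulgA c mulKg.
Qed.


Definition sY (q : coset_of N * coset_of N) : coset_of N * coset_of N :=
  (f (lam (repr q.1) (repr q.2)), f (rho (repr q.2) (repr q.1))).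

Lemma s_f (x y : G) : sY (f x, f y) = (f (lam x y), f (rho y x)).
Proof.
rewrite /sY /=; congr pair.
  by apply: fWD; rewrite coset_reprK.
by apply: fWDr; rewrite coset_reprK.
Qed.

Lemma s12 (x y z : G) : r12 sY (f x, f y, f z) = (f (lam x y), f (rho y x), f z).
Proof. by rewrite /r12 s_f. Qed.
Lemma s23 (x y z : G) : r23 sY (f x, f y, f z) = (f x, f (lam y z), f (rho z y)).
Proof. by rewrite /r23 s_f. Qed.

Lemma sY_sol : is_solution sY.
Proof.
split.
- apply: surj_bij => -[a b].
  have [x [y [hx hy]]] := r_surj (repr a) (repr b).
  by exists (f x, f y); rewrite s_f hx hy !coset_reprK.
- move=> a; apply: surj_bij => c.
  rewrite -(coset_reprK a) -(coset_reprK c); move: (repr a) (repr c) => x w.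
  by exists (f (lam x^-1 w)); rewrite /sol_lambda s_f /= lamK.
- move=> b; apply: surj_bij => c.
  rewrite -(coset_reprK b) -(coset_reprK c); move: (repr b) (repr c) => x w.
  by exists (f (rho x^-1 w)); rewrite /sol_rho s_f /= rhoKV.
- move=> [[a b] c].
  rewrite -(coset_reprK a) -(coset_reprK b) -(coset_reprK c).
  move: (repr a) (repr b) (repr c) => x y z.
  rewrite s12 s23 s12 s23 s12 s23.
  by case: (ybe_aux x y z) => -> -> ->.
Qed.

Lemma step : exists (Y : eqType) (s : Y * Y -> Y * Y) (f : T -> Y),
  [/\ is_solution s /\ is_sol_morphism (sb_solution B) s f,
      (exists x, I0 = [set y | f y == f x]),
      (forall x, #|[set y | f y == f x]| = #|I0|),
      (forall x y, f x = f y -> x \in I1 -> y \in I1) /\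
      (forall x, [set sol_lambda (sb_solution B) x y | y in I1] = I1 /\
                 [set sol_rho (sb_solution B) x y | y in I1] = I1) &
      ((forall y z, y \in I1 -> z \in I1 -> s (f y, f z) = (f z, f y)) /\
       prime (size (undup [seq f x | x <- enum I1])))].
Proof.
exists (coset_of N), sY, (coset N).
split.
- split; first exact: sY_sol.
  by move=> [x y]; rewrite /= s_f.
- exists (1 : G); apply/setP => y.
  by rewrite inE fE rcoset1 memN.
- move=> x.
  rewrite -(cardG B (fun y => f y == f x)).
  rewrite -(cardNI h0) -(card_rcoset N x).
  by apply: eq_card => y; rewrite inE fE.
- split.
    move=> x y e xI; move/eqP: e; rewrite eq_sym fE mem_rcoset => h.
    rewrite -(memN h1) -(mulgKV (x : G) y).
    by apply: groupM; [exact: (subsetP NS) | rewrite memN].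
  move=> x; split.
    by case: h1 => _ _ hl _ _; exact: hl.
  apply/eqP; rewrite eqEcard; apply/andP; split.
    apply/subsetP => _ /imsetP [y yI ->].
    change (@rho _ B x y \in I1).
    rewrite -(memN h1); apply: coset_idr; first exact: normN.
    have yS : y \in S by rewrite memN.
    by rewrite /rho !fM fV (fD (x : G) yS) (f1 yS) mulg1 mulVg.
  rewrite card_imset // => y y' e.
  have : @rho _ B (x : G)^-1 (rho x y) = @rho _ B (x : G)^-1 (rho x y') by rewrite [rho x y]e.
  by rewrite !rhoK.
- split.
    move=> y z yI zI.
    by rewrite s_f lam_triv ?rho_triv ?memN.
  have : size (undup [seq f x | x <- enum I1]) = #|S / N|.
    have /card_uniqP <- := undup_uniq [seq f x | x <- enum I1].
    rewrite (eq_card (mem_undup _)).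
    apply: eq_card => u; apply/mapP/idP.
      move=> [x] xI ->.
      have xI' : (x : T) \in enum I1 by exact: xI.
      rewrite mem_enum in xI'.
      by apply: mem_quotient; rewrite memN.
    case/morphimP => x _ xS ->; exists x => //.
    have : (x : T) \in enum I1 by rewrite mem_enum -(memN h1).
    by [].
  by move=> ->; rewrite cardQ.
Qed.

End Step.


Theorem theorem2p5 (T : finType) (B : skew_brace T) :
  supersoluble_brace B ->
  supersoluble_solution_at (sb_solution B) (sb_zero B).
Proof.
case=> m [I [I0 Im hid hsub]].
exists m, I; split => //.
- by move=> i lt; case: (hsub i lt).
- move=> i lt; case: (hsub i lt) => s p.
  exact: (step (hid i (ltnW lt)) (hid i.+1 lt) s p).
Qed.
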